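(* Consider the system of ordinary differential equations \[ \begin{aligned} \frac{dr_a}{dt} &= m_a\frac{(p_a/\theta_{aa})^{n_{aa}}}{1+(p_a/\theta_{aa})^{n_{aa}}+(p_b/\theta_b)^{n_b}}-\gamma_a r_a+A_1,\\ \frac{dr_b}{dt} &= \frac{m_b}{1+(p_a/\theta_a)^{n_a}}-\gamma_b r_b+B_1,\\ \frac{dp_a}{dt} &= k_a r_a-\delta_a p_a,\qquad \frac{dp_b}{dt} = k_b r_b-\delta_b p_b, \end{aligned} \] where $m_a,m_b,\gamma_a,\gamma_b,k_a,k_b,\delta_a,\delta_b,\theta_a,\theta_b,\theta_{aa}>0$, $A_1,B_1\ge 0$, and $n_a,n_b,n_{aa}$ are positive integers. Let $S^*=(r_a^*,r_b^*,p_a^*,p_b^* )$ be a steady state of this system with $p_a^*>0$, $p_b^*>0$. Set, with $p_a=p_a^*$, $p_b=p_b^*$, \[ X=\frac{m_a n_{aa} p_a^{n_{aa}-1}\theta_b^{n_b}\theta_{aa}^{n_{aa}}(p_b^{n_b}+\theta_b^{n_b})}{(p_a^{n_{aa}}\theta_b^{n_b}+p_b^{n_b}\theta_{aa}^{n_{aa}}+\theta_b^{n_b}\theta_{aa}^{n_{aa}})^2},\quad Y=-\frac{m_a n_b p_a^{n_{aa}}p_b^{n_b-1}\theta_b^{n_b}\theta_{aa}^{n_{aa}}}{(p_a^{n_{aa}}\theta_b^{n_b}+p_b^{n_b}\theta_{aa}^{n_{aa}}+\theta_b^{n_b}\theta_{aa}^{n_{aa}})^2},\quad Z=-\frac{m_b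 n_a p_a^{n_a-1}\theta_a^{n_a}}{(p_a^{n_a}+\theta_a^{n_a})^2}, \] and \[ \begin{aligned} \epsilon_1&=\gamma_a+\gamma_b+\delta_a+\delta_b,\\ \epsilon_2&=\gamma_a\gamma_b+(\gamma_a+\gamma_b)(\delta_a+\delta_b)+\delta_a\delta_b-k_aX,\\ \epsilon_3&=\delta_a\delta_b(\gamma_a+\gamma_b)+(\delta_a+\delta_b)\gamma_a\gamma_b-k_a(\delta_b+\gamma_b)X,\\ \epsilon_4&=\gamma_a\gamma_b\delta_a\delta_b-k_ak_bYZ-k_a\gamma_b\delta_bX. \end{aligned} \] If $\epsilon_1>0$, $\epsilon_3>0$, $\epsilon_4>0$ and $\epsilon_1\epsilon_2\epsilon_3-\epsilon_1^2\epsilon_4-\epsilon_3^2>0$, then $S^*$ is locally asymptotically stable.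
   Context: This models a two-gene network in which gene $a$ is activated by its own protein $p_a$ and repressed by protein $p_b$ (combined via a competitive OR logic), and gene $b$ is repressed by $p_a$; $r_a,r_b$ are mRNA concentrations and $p_a,p_b$ protein concentrations. A steady state is a point where all four right-hand sides vanish. *)

(* Defs.v *)
From Stdlib Require Import Reals.
From Coquelicot Require Import Coquelicot.
Open Scope R_scope.

Record params := mkParams {
  m_a : R; m_b : R; gam_a : R; gam_b : R; k_a : R; k_b : R;
  del_a : R; del_b : R; th_a : R; th_b : R; th_aa : R;
  A1 : R; B1 : R;
  n_a : nat; n_b : nat; n_aa : nat }.

Definition params_ok (P : params) : Prop :=
  0 < m_a P /\ 0 < m_b P /\ 0 < gam_a P /\ 0 < gam_b P /\ 0 < k_a P /\ 0 < k_b P /\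
  0 < del_a P /\ 0 < del_b P /\ 0 < th_a P /\ 0 < th_b P /\ 0 < th_aa P /\
  0 <= A1 P /\ 0 <= B1 P /\
  (0 < n_a P)%nat /\ (0 < n_b P)%nat /\ (0 < n_aa P)%nat.

Definition F_ra (P : params) (ra rb pa pb : R) : R :=
  m_a P * (pa / th_aa P) ^ (n_aa P)
    / (1 + (pa / th_aa P) ^ (n_aa P) + (pb / th_b P) ^ (n_b P))
  - gam_a P * ra + A1 P.
Definition F_rb (P : params) (ra rb pa pb : R) : R :=
  m_b P / (1 + (pa / th_a P) ^ (n_a P)) - gam_b P * rb + B1 P.
Definition F_pa (P : params) (ra rb pa pb : R) : R := k_a P * ra - del_a P * pa.
Definition F_pb (P : params) (ra rb pa pb : R) : R := k_b P * rb - del_b P * pb.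

Definition is_steady_state (P : params) (ra rb pa pb : R) : Prop :=
  F_ra P ra rb pa pb = 0 /\ F_rb P ra rb pa pb = 0 /\
  F_pa P ra rb pa pb = 0 /\ F_pb P ra rb pa pb = 0.

Definition is_solution_on (P : params) (T : Rbar) (xa xb ya yb : R -> R) : Prop :=
  (forall t, 0 < t -> Rbar_lt t T ->
     is_derive xa t (F_ra P (xa t) (xb t) (ya t) (yb t)) /\
     is_derive xb t (F_rb P (xa t) (xb t) (ya t) (yb t)) /\
     is_derive ya t (F_pa P (xa t) (xb t) (ya t) (yb t)) /\
     is_derive yb t (F_pb P (xa t) (xb t) (ya t) (yb t))) /\
  filterlim xa (at_right 0) (locally (xa 0)) /\
  filterlim xb (at_right 0) (locally (xb 0)) /\
  filterlim ya (at_right 0) (locally (ya 0)) /\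
  filterlim yb (at_right 0) (locally (yb 0)).

Definition dist4 (a b c d a' b' c' d' : R) : R :=
  sqrt ((a - a') ^ 2 + (b - b') ^ 2 + (c - c') ^ 2 + (d - d') ^ 2).

Definition loc_asympt_stable (P : params) (ra rb pa pb : R) : Prop :=
  (forall eps, 0 < eps -> exists delta, 0 < delta /\
     forall (T : Rbar) xa xb ya yb, is_solution_on P T xa xb ya yb ->
       dist4 (xa 0) (xb 0) (ya 0) (yb 0) ra rb pa pb < delta ->
       forall t, 0 <= t -> Rbar_lt t T ->
         dist4 (xa t) (xb t) (ya t) (yb t) ra rb pa pb < eps) /\
  (exists delta0, 0 < delta0 /\
     forall xa xb ya yb, is_solution_on P p_infty xa xb ya yb ->
       dist4 (xa 0) (xb 0) (ya 0) (yb 0) ra rb pa pb < delta0 ->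
       is_lim xa p_infty ra /\ is_lim xb p_infty rb /\
       is_lim ya p_infty pa /\ is_lim yb p_infty pb).

Definition Dab (P : params) (pa pb : R) : R :=
  pa ^ (n_aa P) * th_b P ^ (n_b P) + pb ^ (n_b P) * th_aa P ^ (n_aa P)
  + th_b P ^ (n_b P) * th_aa P ^ (n_aa P).

Definition Xq (P : params) (pa pb : R) : R :=
  m_a P * INR (n_aa P) * pa ^ (n_aa P - 1) * th_b P ^ (n_b P) * th_aa P ^ (n_aa P)
    * (pb ^ (n_b P) + th_b P ^ (n_b P)) / (Dab P pa pb) ^ 2.
Definition Yq (P : params) (pa pb : R) : R :=
  - (m_a P * INR (n_b P) * pa ^ (n_aa P) * pb ^ (n_b P - 1) * th_b P ^ (n_b P)
       * th_aa P ^ (n_aa P) / (Dab P pa pb) ^ 2).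
Definition Zq (P : params) (pa pb : R) : R :=
  - (m_b P * INR (n_a P) * pa ^ (n_a P - 1) * th_a P ^ (n_a P)
       / (pa ^ (n_a P) + th_a P ^ (n_a P)) ^ 2).

Definition gn_eps1 (P : params) : R := gam_a P + gam_b P + del_a P + del_b P.
Definition gn_eps2 (P : params) (pa pb : R) : R :=
  gam_a P * gam_b P + (gam_a P + gam_b P) * (del_a P + del_b P)
  + del_a P * del_b P - k_a P * Xq P pa pb.
Definition gn_eps3 (P : params) (pa pb : R) : R :=
  del_a P * del_b P * (gam_a P + gam_b P) + (del_a P + del_b P) * gam_a P * gam_b P
  - k_a P * (del_b P + gam_b P) * Xq P pa pb.
Definition gn_eps4 (P : params) (pa pb : R) : R :=
  gam_a P * gam_b P * del_a P * del_b P - k_a P * k_b P * Yq P pa pb * Zq P pa pb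
  - k_a P * gam_b P * del_b P * Xq P pa pb.

(* Main.v *)
Require Import Defs.
From Stdlib Require Import Reals Lra Psatz Classical.
From Coquelicot Require Import Coquelicot.
Open Scope R_scope.


Definition S1 (u1 u2 u3 u4 : R) := Rabs u1 + Rabs u2 + Rabs u3 + Rabs u4.
Definition FB (f g : R -> R -> R -> R -> R) :=
  exists C, forall u1 u2 u3 u4, Rabs (f u1 u2 u3 u4) <= C * g u1 u2 u3 u4.

Lemma FB_plus f1 f2 g : FB f1 g -> FB f2 g -> FB (fun u1 u2 u3 u4 => f1 u1 u2 u3 u4 + f2 u1 u2 u3 u4) g.
Proof. intros [C1 H1] [C2 H2]; exists (C1+C2); intros.
  eapply Rle_trans; [apply Rabs_triang|]. specialize (H1 u1 u2 u3 u4); specialize (H2 u1 u2 u3 u4); lra. Qed.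
Lemma FB_scal a f g : FB f g -> FB (fun u1 u2 u3 u4 => a * f u1 u2 u3 u4) g.
Proof. intros [C H]; exists (Rabs a * C); intros. rewrite Rabs_mult, Rmult_assoc.
  apply Rmult_le_compat_l; [apply Rabs_pos|apply H]. Qed.
Lemma FB_ext f1 f2 g : (forall u1 u2 u3 u4, f1 u1 u2 u3 u4 = f2 u1 u2 u3 u4) -> FB f1 g -> FB f2 g.
Proof. intros E [C H]; exists C; intros; rewrite <- E; apply H. Qed.

Lemma lin4 c1 c2 c3 c4 u1 u2 u3 u4 :
  Rabs (c1*u1 + c2*u2 + c3*u3 + c4*u4) <= (Rabs c1 + Rabs c2 + Rabs c3 + Rabs c4) * S1 u1 u2 u3 u4.
Proof.
  unfold S1. repeat rewrite Rabs_triang_aux2. 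
  eapply Rle_trans. apply Rabs_triang. eapply Rle_trans. apply Rplus_le_compat_r. apply Rabs_triang.
  eapply Rle_trans. apply Rplus_le_compat_r. apply Rplus_le_compat_r. apply Rabs_triang.
  rewrite !Rabs_mult.
  pose proof (Rabs_pos c1); pose proof (Rabs_pos c2); pose proof (Rabs_pos c3); pose proof (Rabs_pos c4);
  pose proof (Rabs_pos u1); pose proof (Rabs_pos u2); pose proof (Rabs_pos u3); pose proof (Rabs_pos u4).
  nra.
Qed.

Lemma FB_lin f : (forall u1 u2 u3 u4, f u1 u2 u3 u4 =
   f 1 0 0 0 * u1 + f 0 1 0 0 * u2 + f 0 0 1 0 * u3 + f 0 0 0 1 * u4) -> FB f S1.
Proof.
  intro E. exists (Rabs (f 1 0 0 0) + Rabs (f 0 1 0 0) + Rabs (f 0 0 1 0) + Rabs (f 0 0 0 1)).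
  intros. rewrite E. apply lin4.
Qed.

Lemma S1_nonneg u1 u2 u3 u4 : 0 <= S1 u1 u2 u3 u4.
Proof. unfold S1. pose proof (Rabs_pos u1); pose proof (Rabs_pos u2); pose proof (Rabs_pos u3); pose proof (Rabs_pos u4). lra. Qed.

Lemma Q_le_S1sq u1 u2 u3 u4 : u1^2+u2^2+u3^2+u4^2 <= (S1 u1 u2 u3 u4)^2.
Proof. unfold S1. rewrite <- (pow2_abs u1), <- (pow2_abs u2), <- (pow2_abs u3), <- (pow2_abs u4). pose proof (Rabs_pos u1); pose proof (Rabs_pos u2); pose proof (Rabs_pos u3); pose proof (Rabs_pos u4). nra. Qed.

Section Lin.
Variables g1 g2 d1 d2 ka kb X Y Z : R.
Definition a1 := g1+g2+d1+d2.
Definition a2 := g1*g2 + (g1+g2)*(d1+d2) + d1*d2 - ka*X.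
Definition a3 := d1*d2*(g1+g2) + (d1+d2)*g1*g2 - ka*(d2+g2)*X.
Definition a4 := g1*g2*d1*d2 - ka*kb*Y*Z - ka*g2*d2*X.
Definition s2 := a2 - a3/a1.
Definition s4 := a4/s2.
Definition s3 := a3/a1 - s4.
Definition w2 (u1 u2 u3 u4 : R) := kb*u2 - d2*u4.
Definition w3 (u1 u2 u3 u4 : R) := kb*Z*u3 - kb*(g2+d2)*u2 + d2^2*u4.
Definition w4 (u1 u2 u3 u4 : R) := kb*Z*ka*u1 - kb*Z*(d1+g2+d2)*u3 + kb*(g2*(g2+d2)+d2^2)*u2 - d2^3*u4.
Definition z1 (u1 u2 u3 u4 : R) := u4.
Definition z2 (u1 u2 u3 u4 : R) := w2 u1 u2 u3 u4.
Definition z3 (u1 u2 u3 u4 : R) := w3 u1 u2 u3 u4 + s4 * u4.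
Definition z4 (u1 u2 u3 u4 : R) := w4 u1 u2 u3 u4 + (a3/a1) * w2 u1 u2 u3 u4.
Definition Bf (u1 u2 u3 u4 v1 v2 v3 v4 : R) :=
  s2*s3*s4 * (z1 u1 u2 u3 u4 * z1 v1 v2 v3 v4) + s2*s3 * (z2 u1 u2 u3 u4 * z2 v1 v2 v3 v4)
  + s2 * (z3 u1 u2 u3 u4 * z3 v1 v2 v3 v4) + z4 u1 u2 u3 u4 * z4 v1 v2 v3 v4.
Definition L1 (u1 u2 u3 u4 : R) := -g1*u1 + X*u3 + Y*u4.
Definition L2 (u1 u2 u3 u4 : R) := -g2*u2 + Z*u3.
Definition L3 (u1 u2 u3 u4 : R) := ka*u1 - d1*u3.
Definition L4 (u1 u2 u3 u4 : R) := kb*u2 - d2*u4.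

Hypothesis ka0 : ka <> 0.
Hypothesis kb0 : kb <> 0.
Hypothesis Z0 : Z <> 0.
Hypothesis RH1 : 0 < a1.
Hypothesis RH3 : 0 < a3.
Hypothesis RH4 : 0 < a4.
Hypothesis RH : 0 < a1*a2*a3 - a1^2*a4 - a3^2.

Lemma s2_eq : s2 = (a1*a2 - a3)/a1.
Proof. unfold s2. field. lra. Qed.
Lemma D_pos : 0 < a1*a2 - a3.
Proof. assert (a3*(a1*a2-a3) > 0) by nra. nra. Qed.
Lemma s2_pos : 0 < s2.
Proof. rewrite s2_eq. apply Rdiv_lt_0_compat; [apply D_pos|lra]. Qed.
Lemma s4_pos : 0 < s4.
Proof. unfold s4. apply Rdiv_lt_0_compat; [lra|apply s2_pos]. Qed.
Lemma s3_pos : 0 < s3.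
Proof.
  pose proof D_pos. unfold s3, s4. rewrite s2_eq.
  replace (a3 / a1 - a4 / ((a1 * a2 - a3) / a1)) with ((a3*(a1*a2-a3) - a1^2*a4)/(a1*(a1*a2-a3))).
  2:{ field. lra. }
  apply Rdiv_lt_0_compat; [nra|]. nra.
Qed.
Lemma CH u1 u2 u3 u4 :
  w4 (L1 u1 u2 u3 u4) (L2 u1 u2 u3 u4) (L3 u1 u2 u3 u4) (L4 u1 u2 u3 u4)
  = - a1 * w4 u1 u2 u3 u4 - a2 * w3 u1 u2 u3 u4 - a3 * w2 u1 u2 u3 u4 - a4 * u4.
Proof. unfold w2,w3,w4,L1,L2,L3,L4,a1,a2,a3,a4. ring. Qed.

Lemma Bf_L u1 u2 u3 u4 :
  Bf u1 u2 u3 u4 (L1 u1 u2 u3 u4) (L2 u1 u2 u3 u4) (L3 u1 u2 u3 u4) (L4 u1 u2 u3 u4)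
  = - a1 * (z4 u1 u2 u3 u4)^2.
Proof.
  pose proof s2_pos as Hs2.
  set (l1 := L1 u1 u2 u3 u4). set (l2 := L2 u1 u2 u3 u4).
  set (l3 := L3 u1 u2 u3 u4). set (l4 := L4 u1 u2 u3 u4).
  assert (E1 : z1 l1 l2 l3 l4 = z2 u1 u2 u3 u4) by (unfold z1, z2, w2, l4, L4; ring).
  assert (E2 : z2 l1 l2 l3 l4 = z3 u1 u2 u3 u4 - s4 * z1 u1 u2 u3 u4)
    by (unfold z1, z2, z3, w2, w3, l2, l4, L2, L4; ring).
  assert (E3 : z3 l1 l2 l3 l4 = z4 u1 u2 u3 u4 - s3 * z2 u1 u2 u3 u4)
    by (unfold z2, z3, z4, w2, w3, w4, l1, l2, l3, l4, L1, L2, L3, L4, s3; ring).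
  assert (E4 : z4 l1 l2 l3 l4 = - s2 * z3 u1 u2 u3 u4 - a1 * z4 u1 u2 u3 u4).
  { unfold z4 at 1. unfold l1, l2, l3, l4. rewrite CH.
    replace (w2 (L1 u1 u2 u3 u4) (L2 u1 u2 u3 u4) (L3 u1 u2 u3 u4) (L4 u1 u2 u3 u4))
      with (w3 u1 u2 u3 u4) by (unfold w2, w3, L2, L4; ring).
    unfold z3, z4. unfold s4. unfold s2 in *. field. pose proof D_pos. split; lra. }
  unfold Bf. rewrite E1, E2, E3, E4. ring.
Qed.

Lemma z_FB1 : FB z1 S1. Proof. apply FB_lin. intros. unfold z1. ring. Qed.
Lemma z_FB2 : FB z2 S1. Proof. apply FB_lin. intros. unfold z2, w2. ring. Qed.
Lemma z_FB3 : FB z3 S1. Proof. apply FB_lin. intros. unfold z3, w3. ring. Qed.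
Lemma z_FB4 : FB z4 S1. Proof. apply FB_lin. intros. unfold z4, w4, w2. ring. Qed.

Lemma Bf_bound : exists K, 0 <= K /\ forall u1 u2 u3 u4 v1 v2 v3 v4,
  Rabs (Bf u1 u2 u3 u4 v1 v2 v3 v4) <= K * S1 u1 u2 u3 u4 * S1 v1 v2 v3 v4.
Proof.
  destruct z_FB1 as [C1 H1]; destruct z_FB2 as [C2 H2]; destruct z_FB3 as [C3 H3]; destruct z_FB4 as [C4 H4].
  pose proof s2_pos; pose proof s3_pos; pose proof s4_pos.
  exists (s2*s3*s4*C1^2 + s2*s3*C2^2 + s2*C3^2 + C4^2). split.
  { assert (0 < s2*s3) by nra. assert (0 < s2*s3*s4) by nra. nra. }
  intros.
  assert (K : forall (z : R -> R -> R -> R -> R) C, (forall u1 u2 u3 u4, Rabs (z u1 u2 u3 u4) <= C * S1 u1 u2 u3 u4) ->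
     Rabs (z u1 u2 u3 u4 * z v1 v2 v3 v4) <= C^2 * S1 u1 u2 u3 u4 * S1 v1 v2 v3 v4).
  { intros z C HC. rewrite Rabs_mult. pose proof (HC u1 u2 u3 u4). pose proof (HC v1 v2 v3 v4).
    pose proof (Rabs_pos (z u1 u2 u3 u4)). pose proof (Rabs_pos (z v1 v2 v3 v4)).
    pose proof (S1_nonneg u1 u2 u3 u4). pose proof (S1_nonneg v1 v2 v3 v4).
    replace (C^2 * S1 u1 u2 u3 u4 * S1 v1 v2 v3 v4) with ((C * S1 u1 u2 u3 u4) * (C * S1 v1 v2 v3 v4)) by ring.
    apply Rmult_le_compat; auto. }
  pose proof (K z1 C1 H1); pose proof (K z2 C2 H2); pose proof (K z3 C3 H3); pose proof (K z4 C4 H4).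
  unfold Bf.
  set (p1 := z1 u1 u2 u3 u4 * z1 v1 v2 v3 v4) in *.
  set (p2 := z2 u1 u2 u3 u4 * z2 v1 v2 v3 v4) in *.
  set (p3 := z3 u1 u2 u3 u4 * z3 v1 v2 v3 v4) in *.
  set (p4 := z4 u1 u2 u3 u4 * z4 v1 v2 v3 v4) in *.
  assert (0 < s2*s3) by nra. assert (0 < s2*s3*s4) by nra.
  eapply Rle_trans. apply Rabs_triang. eapply Rle_trans. apply Rplus_le_compat_r. apply Rabs_triang.
  eapply Rle_trans. apply Rplus_le_compat_r. apply Rplus_le_compat_r. apply Rabs_triang.
  rewrite !Rabs_mult. rewrite (Rabs_right s2), (Rabs_right s3), (Rabs_right s4) by lra.
  set (SS := S1 u1 u2 u3 u4 * S1 v1 v2 v3 v4).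
  replace ((s2 * s3 * s4 * C1 ^ 2 + s2 * s3 * C2 ^ 2 + s2 * C3 ^ 2 + C4 ^ 2) * S1 u1 u2 u3 u4 * S1 v1 v2 v3 v4)
   with (s2 * s3 * s4 * (C1 ^ 2 * S1 u1 u2 u3 u4 * S1 v1 v2 v3 v4) + s2 * s3 * (C2 ^ 2 * S1 u1 u2 u3 u4 * S1 v1 v2 v3 v4)
        + s2 * (C3 ^ 2 * S1 u1 u2 u3 u4 * S1 v1 v2 v3 v4) + C4 ^ 2 * S1 u1 u2 u3 u4 * S1 v1 v2 v3 v4) by ring.
  repeat apply Rplus_le_compat; try apply Rmult_le_compat_l; try lra; auto.
Qed.

Definition Zs (u1 u2 u3 u4 : R) := Rabs (z1 u1 u2 u3 u4) + Rabs (z2 u1 u2 u3 u4) + Rabs (z3 u1 u2 u3 u4) + Rabs (z4 u1 u2 u3 u4).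

Lemma FB_z1 : FB z1 Zs.
Proof. exists 1. intros. unfold Zs. pose proof (Rabs_pos (z2 u1 u2 u3 u4)); pose proof (Rabs_pos (z3 u1 u2 u3 u4)); pose proof (Rabs_pos (z4 u1 u2 u3 u4)). lra. Qed.
Lemma FB_z2 : FB z2 Zs.
Proof. exists 1. intros. unfold Zs. pose proof (Rabs_pos (z1 u1 u2 u3 u4)); pose proof (Rabs_pos (z3 u1 u2 u3 u4)); pose proof (Rabs_pos (z4 u1 u2 u3 u4)). lra. Qed.
Lemma FB_z3 : FB z3 Zs.
Proof. exists 1. intros. unfold Zs. pose proof (Rabs_pos (z2 u1 u2 u3 u4)); pose proof (Rabs_pos (z1 u1 u2 u3 u4)); pose proof (Rabs_pos (z4 u1 u2 u3 u4)). lra. Qed.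
Lemma FB_z4 : FB z4 Zs.
Proof. exists 1. intros. unfold Zs. pose proof (Rabs_pos (z2 u1 u2 u3 u4)); pose proof (Rabs_pos (z3 u1 u2 u3 u4)); pose proof (Rabs_pos (z1 u1 u2 u3 u4)). lra. Qed.

Lemma FB_u4 : FB (fun u1 u2 u3 u4 => u4) Zs.
Proof. apply FB_ext with z1; [intros; reflexivity| apply FB_z1]. Qed.
Lemma FB_u2 : FB (fun u1 u2 u3 u4 => u2) Zs.
Proof.
  apply FB_ext with (fun u1 u2 u3 u4 => /kb * (z2 u1 u2 u3 u4 + d2 * u4)).
  { intros. unfold z2, w2. field; repeat split; auto. }
  apply FB_scal. apply FB_plus. apply FB_z2. apply (FB_scal d2 (fun u1 u2 u3 u4 => u4)). apply FB_u4.
Qed.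
Lemma FB_u3 : FB (fun u1 u2 u3 u4 => u3) Zs.
Proof.
  apply FB_ext with (fun u1 u2 u3 u4 => /(kb*Z) * (z3 u1 u2 u3 u4 + (-s4 - d2^2) * u4 + kb*(g2+d2) * u2)).
  { intros. unfold z3, w3. field; repeat split; auto. }
  apply FB_scal. apply FB_plus. apply FB_plus. apply FB_z3.
  apply (FB_scal _ (fun u1 u2 u3 u4 => u4)). apply FB_u4.
  apply (FB_scal _ (fun u1 u2 u3 u4 => u2)). apply FB_u2.
Qed.
Lemma FB_u1 : FB (fun u1 u2 u3 u4 => u1) Zs.
Proof.
  apply FB_ext with (fun u1 u2 u3 u4 => /(kb*Z*ka) * (z4 u1 u2 u3 u4 + (-(a3/a1)) * z2 u1 u2 u3 u4
     + (kb*Z*(d1+g2+d2)) * u3 + (- kb*(g2*(g2+d2)+d2^2)) * u2 + d2^3 * u4)).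
  { intros. unfold z4, z2, w4, w2. field; repeat split; try lra; auto. }
  apply FB_scal. apply FB_plus; [apply FB_plus; [apply FB_plus; [apply FB_plus|]|]|].
  apply FB_z4.
  apply (FB_scal _ z2). apply FB_z2.
  apply (FB_scal _ (fun u1 u2 u3 u4 => u3)). apply FB_u3.
  apply (FB_scal _ (fun u1 u2 u3 u4 => u2)). apply FB_u2.
  apply (FB_scal _ (fun u1 u2 u3 u4 => u4)). apply FB_u4.
Qed.

Lemma V_lower : exists m, 0 < m /\ forall u1 u2 u3 u4,
  m * (u1^2+u2^2+u3^2+u4^2) <= Bf u1 u2 u3 u4 u1 u2 u3 u4.
Proof.
  destruct FB_u1 as [C1 H1]; destruct FB_u2 as [C2 H2]; destruct FB_u3 as [C3 H3]; destruct FB_u4 as [C4 H4].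
  pose proof s2_pos; pose proof s3_pos; pose proof s4_pos.
  assert (0 < s2*s3) by nra. assert (0 < s2*s3*s4) by nra.
  set (am := Rmin (Rmin (s2*s3*s4) (s2*s3)) (Rmin s2 1)).
  assert (Ham : 0 < am) by (unfold am; repeat apply Rmin_pos; lra).
  set (C := Rabs C1 + Rabs C2 + Rabs C3 + Rabs C4).
  exists (am / (4 * (C^2 + 1))). split.
  { apply Rdiv_lt_0_compat; [lra|]. pose proof (pow2_ge_0 C). lra. }
  intros.
  assert (HS : S1 u1 u2 u3 u4 <= C * Zs u1 u2 u3 u4).
  { unfold S1, C. specialize (H1 u1 u2 u3 u4); specialize (H2 u1 u2 u3 u4); specialize (H3 u1 u2 u3 u4); specialize (H4 u1 u2 u3 u4).
    simpl in *. assert (0 <= Zs u1 u2 u3 u4) by (unfold Zs; pose proof (Rabs_pos (z1 u1 u2 u3 u4)); pose proof (Rabs_pos (z2 u1 u2 u3 u4)); pose proof (Rabs_pos (z3 u1 u2 u3 u4)); pose proof (Rabs_pos (z4 u1 u2 u3 u4)); lra).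
    pose proof (Rle_abs C1); pose proof (Rle_abs C2); pose proof (Rle_abs C3); pose proof (Rle_abs C4). nra. }
  pose proof (Q_le_S1sq u1 u2 u3 u4).
  pose proof (S1_nonneg u1 u2 u3 u4).
  set (y1 := z1 u1 u2 u3 u4) in *. set (y2 := z2 u1 u2 u3 u4) in *.
  set (y3 := z3 u1 u2 u3 u4) in *. set (y4 := z4 u1 u2 u3 u4) in *.
  assert (HZ : (Zs u1 u2 u3 u4)^2 <= 4 * (y1^2+y2^2+y3^2+y4^2)).
  { unfold Zs. fold y1 y2 y3 y4. rewrite <- (pow2_abs y1), <- (pow2_abs y2), <- (pow2_abs y3), <- (pow2_abs y4).
    generalize (Rabs y1) (Rabs y2) (Rabs y3) (Rabs y4). intros b1 b2 b3 b4.
    pose proof (pow2_ge_0 (b1-b2)); pose proof (pow2_ge_0 (b1-b3)); pose proof (pow2_ge_0 (b1-b4)); pose proof (pow2_ge_0 (b2-b3)); pose proof (pow2_ge_0 (b2-b4)); pose proof (pow2_ge_0 (b3-b4)). nra. }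
  assert (HV : am * (y1^2+y2^2+y3^2+y4^2) <= Bf u1 u2 u3 u4 u1 u2 u3 u4).
  { unfold Bf. fold y1 y2 y3 y4.
    assert (am <= s2*s3*s4) by (unfold am; eapply Rle_trans; [apply Rmin_l|apply Rmin_l]).
    assert (am <= s2*s3) by (unfold am; eapply Rle_trans; [apply Rmin_l|apply Rmin_r]).
    assert (am <= s2) by (unfold am; eapply Rle_trans; [apply Rmin_r|apply Rmin_l]).
    assert (am <= 1) by (unfold am; eapply Rle_trans; [apply Rmin_r|apply Rmin_r]).
    pose proof (pow2_ge_0 y1); pose proof (pow2_ge_0 y2); pose proof (pow2_ge_0 y3); pose proof (pow2_ge_0 y4).
    nra. }
  assert (HSZ : (S1 u1 u2 u3 u4)^2 <= C^2 * (Zs u1 u2 u3 u4)^2).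
  { assert (0 <= C * Zs u1 u2 u3 u4) by lra. 
    replace (C^2 * (Zs u1 u2 u3 u4)^2) with ((C * Zs u1 u2 u3 u4)^2) by ring.
    apply pow_incr; lra. }
  set (Q := u1^2+u2^2+u3^2+u4^2) in *.
  set (yy := y1^2+y2^2+y3^2+y4^2) in *.
  assert (Q <= 4 * C^2 * yy) by nra.
  assert (0 <= Q) by (unfold Q; pose proof (pow2_ge_0 u1); pose proof (pow2_ge_0 u2); pose proof (pow2_ge_0 u3); pose proof (pow2_ge_0 u4); lra).
  apply Rle_trans with (am * yy); [|exact HV].
  unfold Rdiv. rewrite Rmult_assoc. apply Rmult_le_compat_l; [lra|].
  pose proof (pow2_ge_0 C).
  apply Rmult_le_reg_l with (4 * (C^2+1)); [lra|].
  rewrite <- Rmult_assoc, Rinv_r, Rmult_1_l by lra.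
  assert (0 <= yy) by (unfold yy; pose proof (pow2_ge_0 y1); pose proof (pow2_ge_0 y2); pose proof (pow2_ge_0 y3); pose proof (pow2_ge_0 y4); lra).
  nra.
Qed.
End Lin.
Lemma cont_pos f : continuity_pt f 0 -> 0 < f 0 -> exists d, 0 < d /\ forall s, 0 <= s < d -> 0 < f s.
Proof.
  intros Hc Hf. destruct (Hc (f 0 / 2) ltac:(lra)) as [d [Hd H]].
  exists d. split; auto. intros s Hs.
  destruct (Req_dec s 0) as [E|E]. { subst; auto. }
  assert (Hx : Rabs (f s - f 0) < f 0 / 2).
  { apply (H s). split. { split; [exact I| auto]. } simpl. unfold R_dist. rewrite Rminus_0_r, Rabs_right; lra. }
  apply Rabs_def2 in Hx. lra.
Qed.

Lemma pow_div' x y n : y <> 0 -> (x/y)^n = x^n / y^n.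
Proof. intro. unfold Rdiv. rewrite Rpow_mult_distr, pow_inv. reflexivity. Qed.

Lemma proj2_diff f x y l : derivable_pt_lim f y l -> differentiable_pt_lim (fun _ v => f v) x y 0 l.
Proof.
  intros H eps. destruct (H eps (cond_pos eps)) as [d Hd].
  exists d. intros u v _ Hv.
  destruct (Req_dec v y) as [E|E].
  { subst. replace (f y - f y - (0 * (u - x) + l * (y - y))) with 0 by ring. rewrite Rabs_R0.
    apply Rmult_le_pos; [left; apply cond_pos| apply Rle_trans with (Rabs (u-x)); [apply Rabs_pos|apply Rmax_l]]. }
  assert (Hh : v - y <> 0) by lra.
  specialize (Hd (v - y) Hh Hv). replace (y + (v - y)) with v in Hd by ring.
  replace (f v - f y - (0 * (u - x) + l * (v - y))) with (((f v - f y) / (v - y) - l) * (v - y)) by (field; auto).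
  rewrite Rabs_mult. apply Rle_trans with (eps * Rabs (v - y)).
  { apply Rmult_le_compat_r; [apply Rabs_pos| lra]. }
  apply Rmult_le_compat_l; [left; apply cond_pos|apply Rmax_r].
Qed.

Lemma phi_diff c a0 b0 : 0 < 1 + a0 + b0 ->
  differentiable_pt_lim (fun a b => c * a / (1 + a + b)) a0 b0
    (c * (1 + b0) / (1 + a0 + b0)^2) (- (c * a0) / (1 + a0 + b0)^2).
Proof.
  intros HD0 eps. set (D0 := 1 + a0 + b0) in *.
  set (K := Rabs c * (Rabs (1 + b0) + Rabs a0)).
  assert (HK : 0 <= K) by (unfold K; pose proof (Rabs_pos c); pose proof (Rabs_pos (1+b0)); pose proof (Rabs_pos a0); nra).
  assert (He := cond_pos eps).
  assert (HD3 : 0 < D0^3) by (apply pow_lt; lra).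
  assert (Hd : 0 < Rmin (D0/4) (eps * D0^3 / (4*K+1))).
  { apply Rmin_pos; [lra|]. apply Rdiv_lt_0_compat; [nra|lra]. }
  set (dl := Rmin (D0/4) (eps * D0^3 / (4*K+1))) in *.
  exists (mkposreal dl Hd). intros u v Hu Hv. change (pos (mkposreal dl Hd)) with dl in Hu, Hv.
  assert (H : dl <= D0/4) by apply Rmin_l.
  assert (H0 : dl <= eps * D0^3 / (4*K+1)) by apply Rmin_r.
  set (da := u - a0) in *. set (db := v - b0) in *.
  set (M := Rmax (Rabs da) (Rabs db)).
  assert (HMa : Rabs da <= M) by apply Rmax_l.
  assert (HMb : Rabs db <= M) by apply Rmax_r.
  assert (HM : M < dl) by (unfold M; apply Rmax_lub_lt; auto).
  assert (HD : D0 / 2 <= 1 + u + v).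
  { apply Rabs_def2 in Hu. apply Rabs_def2 in Hv. unfold da, db, D0 in *. destruct Hu, Hv. lra. }
  replace (c * u / (1 + u + v) - c * a0 / D0 -
    (c * (1 + b0) / D0 ^ 2 * da + - (c * a0) / D0 ^ 2 * db))
    with (- c * ((da * (1 + b0) - a0 * db) * (da + db)) / ((1 + u + v) * D0^2)).
  2:{ unfold da, db, D0 in *. field. split; apply Rgt_not_eq; lra. }
  assert (HE : Rabs (da * (1 + b0) - a0 * db) <= (Rabs (1+b0) + Rabs a0) * M).
  { eapply Rle_trans. apply Rabs_triang. rewrite Rabs_Ropp, !Rabs_mult.
    pose proof (Rabs_pos (1+b0)); pose proof (Rabs_pos a0). nra. }
  assert (HF : Rabs (da + db) <= 2 * M).
  { eapply Rle_trans. apply Rabs_triang. lra. }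
  assert (HM0 : 0 <= M) by (pose proof (Rabs_pos da); lra).
  unfold Rdiv. rewrite Rabs_mult, Rabs_mult, Rabs_mult, Rabs_Ropp.
  rewrite Rabs_inv. rewrite (Rabs_right ((1 + u + v) * D0 ^ 2)) by (apply Rle_ge; apply Rmult_le_pos; [lra| apply pow_le; lra]).
  set (Dp := (1 + u + v) * D0^2).
  assert (HDp : D0^3 / 2 <= Dp) by (unfold Dp; simpl; nra).
  assert (HDp0 : 0 < Dp) by lra.
  apply Rmult_le_reg_r with Dp; [lra|].
  rewrite Rmult_assoc, Rinv_l, Rmult_1_r by lra.
  assert (Hprod : Rabs c * (Rabs (da * (1 + b0) - a0 * db) * Rabs (da + db)) <= K * M * (2 * M)).
  { unfold K. pose proof (Rabs_pos c).
    apply Rle_trans with (Rabs c * (((Rabs (1+b0) + Rabs a0) * M) * (2*M))).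
    - apply Rmult_le_compat_l; [lra|]. apply Rmult_le_compat; auto using Rabs_pos.
    - right; ring. }
  eapply Rle_trans; [exact Hprod|].
  assert (H4 : (4*K+1) * M <= eps * D0^3).
  { assert (M <= eps * D0 ^ 3 / (4 * K + 1)) by lra.
    apply Rmult_le_reg_r with (/ (4*K+1)). apply Rinv_0_lt_compat; lra.
    rewrite (Rmult_comm (4*K+1)), Rmult_assoc, Rinv_r, Rmult_1_r by lra. exact H1. }
  apply Rle_trans with (eps * M * (D0^3/2)).
  2:{ apply Rmult_le_compat_l; [apply Rmult_le_pos; lra | exact HDp]. }
  pose proof (Rmult_le_compat_l (M/2) _ _ ltac:(lra) H4). nra.
Qed.


Lemma U_deriv th n p0 : th <> 0 ->
  derivable_pt_lim (fun p => (p/th)^n) p0 (INR n * (p0/th)^(pred n) / th).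
Proof. intro. apply is_derive_Reals. auto_derive; auto. unfold Rdiv. ring. Qed.

Ltac posneq := repeat split; apply Rgt_not_eq; unfold Rgt;
  repeat (apply Rplus_lt_0_compat || apply Rmult_lt_0_compat); lra.

Lemma H_diff P pa pb : params_ok P -> 0 < pa -> 0 < pb ->
  differentiable_pt_lim (fun p q => m_a P * (p / th_aa P) ^ (n_aa P)
    / (1 + (p / th_aa P) ^ (n_aa P) + (q / th_b P) ^ (n_b P))) pa pb (Xq P pa pb) (Yq P pa pb).
Proof.
  intros Hok Ha Hb.
  destruct P as [ma mb ga gb ka kb da db tha thb thaa A1 B1 na nb naa]. unfold params_ok in Hok; simpl in *.
  destruct Hok as (Hma & Hmb & Hga & Hgb & Hka & Hkb & Hda & Hdb & Htha & Hthb & Hthaa & HA & HB & Hna & Hnb & Hnaa).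
  set (U0 := (pa/thaa)^naa). set (V0 := (pb/thb)^nb).
  assert (HU0 : 0 < U0) by (apply pow_lt; apply Rdiv_lt_0_compat; lra).
  assert (HV0 : 0 < V0) by (apply pow_lt; apply Rdiv_lt_0_compat; lra).
  pose proof (differentiable_pt_lim_comp (fun a b => ma * a / (1 + a + b))
    (fun u _ => (u/thaa)^naa) (fun _ v => (v/thb)^nb) pa pb _ _ _ 0 0 _
    (phi_diff ma U0 V0 ltac:(lra))
    (differentiable_pt_lim_proj1_0 _ pa pb _ (U_deriv thaa naa pa ltac:(lra)))
    (proj2_diff _ pa pb _ (U_deriv thb nb pb ltac:(lra)))) as Hc.
  simpl in Hc.
  match type of Hc with differentiable_pt_lim _ _ _ ?lx ?ly =>
    replace (Xq _ pa pb) with lx; [replace (Yq _ pa pb) with ly; [exact Hc|]|] end.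
  - unfold Yq, Dab. simpl. unfold U0, V0.
    destruct nb as [|k]; [lia|]. set (N := INR (S k)). simpl pred. try rewrite Nat.sub_0_r.
    rewrite !pow_div' by lra. simpl. rewrite ?Nat.sub_0_r.
    assert (0 < pa^naa) by (apply pow_lt; lra). assert (0 < pb^k) by (apply pow_lt; lra).
    assert (0 < thaa^naa) by (apply pow_lt; lra). assert (0 < thb^k) by (apply pow_lt; lra).
    set (a := pa^naa) in *. set (b := pb^k) in *. set (c := thaa^naa) in *. set (e := thb^k) in *.
    field. posneq.
  - unfold Xq, Dab. simpl. unfold U0, V0.
    destruct naa as [|k]; [lia|]. set (N := INR (S k)). simpl pred.
    rewrite !pow_div' by lra. simpl. rewrite ?Nat.sub_0_r.
    assert (0 < pa^k) by (apply pow_lt; lra). assert (0 < pb^nb) by (apply pow_lt; lra).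
    assert (0 < thaa^k) by (apply pow_lt; lra). assert (0 < thb^nb) by (apply pow_lt; lra).
    set (a := pa^k) in *. set (b := pb^nb) in *. set (c := thaa^k) in *. set (e := thb^nb) in *.
    field. posneq.
Qed.

Lemma G_deriv P pa pb : params_ok P -> 0 < pa ->
  derivable_pt_lim (fun p => m_b P / (1 + (p / th_a P) ^ (n_a P))) pa (Zq P pa pb).
Proof.
  intros Hok Ha.
  destruct P as [ma mb ga gb ka kb da db tha thb thaa A1 B1 na nb naa]. unfold params_ok in Hok; simpl in *.
  destruct Hok as (Hma & Hmb & Hga & Hgb & Hka & Hkb & Hda & Hdb & Htha & Hthb & Hthaa & HA & HB & Hna & Hnb & Hnaa).
  apply is_derive_Reals.
  assert (0 < (pa/tha)^na) by (apply pow_lt; apply Rdiv_lt_0_compat; lra).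
  auto_derive. { lra. }
  unfold Zq. simpl.
  destruct na as [|k]; [lia|]. set (N := INR (S k)). simpl pred.
  rewrite !Rpow_mult_distr, !pow_inv. simpl. rewrite ?Nat.sub_0_r.
  assert (0 < pa^k) by (apply pow_lt; lra). assert (0 < tha^k) by (apply pow_lt; lra).
  set (a := pa^k) in *. set (c := tha^k) in *.
  field. posneq.
Qed.

Definition Hf P p q := m_a P * (p / th_aa P) ^ (n_aa P)
    / (1 + (p / th_aa P) ^ (n_aa P) + (q / th_b P) ^ (n_b P)).
Definition Gf P p := m_b P / (1 + (p / th_a P) ^ (n_a P)).

Lemma NL_bound P pa pb : params_ok P -> 0 < pa -> 0 < pb ->
  forall eta, 0 < eta -> exists r, 0 < r /\ forall u3 u4, Rabs u3 < r -> Rabs u4 < r ->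
   Rabs (Hf P (pa+u3) (pb+u4) - Hf P pa pb - (Xq P pa pb * u3 + Yq P pa pb * u4)) <= eta * (Rabs u3 + Rabs u4)
   /\ Rabs (Gf P (pa+u3) - Gf P pa - Zq P pa pb * u3) <= eta * Rabs u3.
Proof.
  intros Hok Ha Hb eta Heta.
  destruct (H_diff P pa pb Hok Ha Hb (mkposreal eta Heta)) as [d1 Hd1].
  destruct (G_deriv P pa pb Hok Ha eta Heta) as [d2 Hd2].
  exists (Rmin d1 d2). split. { apply Rmin_pos; apply cond_pos. }
  intros u3 u4 H3 H4. split.
  - assert (Rabs (pa + u3 - pa) < d1) by (replace (pa+u3-pa) with u3 by ring; eapply Rlt_le_trans; [exact H3|apply Rmin_l]).
    assert (Rabs (pb + u4 - pb) < d1) by (replace (pb+u4-pb) with u4 by ring; eapply Rlt_le_trans; [exact H4|apply Rmin_l]).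
    specialize (Hd1 _ _ H H0). simpl in Hd1.
    replace (pa+u3-pa) with u3 in Hd1 by ring. replace (pb+u4-pb) with u4 in Hd1 by ring.
    unfold Hf. eapply Rle_trans; [exact Hd1|]. apply Rmult_le_compat_l; [lra|].
    pose proof (Rabs_pos u3); pose proof (Rabs_pos u4).
    unfold Rmax; destruct Rle_dec; lra.
  - destruct (Req_dec u3 0) as [E|E].
    + subst. rewrite Rplus_0_r. replace (Gf P pa - Gf P pa - Zq P pa pb * 0) with 0 by ring.
      rewrite Rabs_R0. lra.
    + assert (Rabs u3 < d2) by (eapply Rlt_le_trans; [exact H3|apply Rmin_r]).
      specialize (Hd2 u3 E H). unfold Gf.
      set (A := m_b P / (1 + ((pa + u3) / th_a P) ^ n_a P) - m_b P / (1 + (pa / th_a P) ^ n_a P)) in *.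
      replace (A - Zq P pa pb * u3) with ((A / u3 - Zq P pa pb) * u3) by (field; auto).
      rewrite Rabs_mult. apply Rmult_le_compat_r; [apply Rabs_pos| lra].
Qed.

Lemma ball_R (x e y : R) : ball x e y <-> Rabs (y - x) < e.
Proof. reflexivity. Qed.

Lemma rc_eps f l : filterlim f (at_right 0) (locally l) ->
  forall eps, 0 < eps -> exists d, 0 < d /\ forall y, 0 < y < d -> Rabs (f y - l) < eps.
Proof.
  intros H eps He. apply filterlim_locally with (eps := mkposreal eps He) in H.
  destruct H as [d Hd]. exists d. split; [apply cond_pos|]. intros y Hy.
  apply Hd; [|lra]. apply ball_R. rewrite Rminus_0_r, Rabs_right; lra.
Qed.

Lemma cont_eps (h : R -> R) t : ex_derive h t ->
  forall eps, 0 < eps -> exists d, 0 < d /\ forall y, Rabs (y - t) < d -> Rabs (h y - h t) < eps.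
Proof.
  intros H eps He. apply ex_derive_continuous in H.
  apply filterlim_locally with (eps := mkposreal eps He) in H.
  destruct H as [d Hd]. exists d. split; [apply cond_pos|]. intros y Hy.
  apply Hd. apply ball_R. exact Hy.
Qed.

Section Trap.
Variables (h : R -> R) (T : Rbar) (l s : R).
Hypothesis Hs : 0 < s.
Hypothesis Hd : forall t, 0 < t -> Rbar_lt t T -> ex_derive h t /\ (h t < l -> Derive h t <= - s * h t).
Hypothesis Hc0 : forall eps, 0 < eps -> exists d, 0 < d /\ forall y, 0 < y < d -> Rabs (h y - h 0) < eps.
Hypothesis Hpos : forall t, 0 <= h t.
Hypothesis H0 : h 0 < l.

Lemma Tlt a b : a <= b -> Rbar_lt b T -> Rbar_lt a T.
Proof. intros. eapply Rbar_le_lt_trans; [|eassumption]. simpl. exact H. Qed.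

Lemma mvt_step a b : 0 < a -> a <= b -> Rbar_lt b T -> (forall t, a <= t <= b -> h t < l) ->
  exists c, a <= c <= b /\ h b - h a = Derive h c * (b - a) /\ Derive h c <= - s * h c.
Proof.
  intros Ha Hab HbT Hl.
  destruct (MVT_gen h a b (Derive h)) as [c [Hc E]].
  - intros x Hx. rewrite Rmin_left, Rmax_right in Hx by lra.
    apply Derive_correct. apply Hd; [lra|]. apply (Tlt x b); [lra|auto].
  - intros x Hx. rewrite Rmin_left, Rmax_right in Hx by lra.
    apply derivable_continuous_pt. apply ex_derive_Reals_0. apply Hd; [lra|]. apply (Tlt x b); [lra|auto].
  - rewrite Rmin_left, Rmax_right in Hc by lra. exists c. split; [auto|split; auto].
    apply Hd; [lra| apply (Tlt c b); [lra|auto] |]. apply Hl; lra.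
Qed.

Lemma mono a b : 0 < a -> a <= b -> Rbar_lt b T -> (forall t, a <= t <= b -> h t < l) -> h b <= h a.
Proof.
  intros Ha Hab HbT Hl. destruct (mvt_step a b Ha Hab HbT Hl) as [c [Hc [E Hder]]].
  pose proof (Hpos c). assert (Derive h c <= 0) by nra. nra.
Qed.

Lemma decay a b : 0 < a -> a <= b -> Rbar_lt b T -> (forall t, a <= t <= b -> h t < l) ->
  h b * (1 + s * (b - a)) <= h a.
Proof.
  intros Ha Hab HbT Hl. destruct (mvt_step a b Ha Hab HbT Hl) as [c [Hc [E Hder]]].
  assert (h b <= h c) by (apply mono; try lra; auto; intros; apply Hl; lra).
  assert (X1 : (Derive h c + s * h c) * (b - a) <= 0) by (apply Rmult_le_0_r; lra).
  assert (X2 : 0 <= s * (h c - h b) * (b - a)) by (apply Rmult_le_pos; [apply Rmult_le_pos|]; lra).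
  nra.
Qed.

Lemma le0 b : 0 < b -> Rbar_lt b T -> (forall t, 0 < t <= b -> h t < l) -> h b <= h 0.
Proof.
  intros Hb HbT Hl. destruct (Rle_dec (h b) (h 0)) as [|Hn]; auto. exfalso.
  destruct (Hc0 (h b - h 0) ltac:(lra)) as [d [Hdp Hdd]].
  set (a := Rmin (d/2) b).
  assert (0 < a) by (apply Rmin_pos; lra).
  assert (a <= b) by apply Rmin_r. assert (a <= d/2) by apply Rmin_l.
  specialize (Hdd a ltac:(lra)). apply Rabs_def2 in Hdd.
  assert (h b <= h a) by (apply mono; auto; intros; apply Hl; lra). lra.
Qed.

Lemma trap t : 0 <= t -> Rbar_lt t T -> h t < l.
Proof.
  intros Ht HtT. destruct (Rlt_dec (h t) l) as [|Hn]; auto. exfalso.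
  assert (Ht1 : 0 < t). { destruct (Req_dec t 0); [subst; lra| lra]. }
  set (E := fun x => 0 <= x <= t /\ forall y, 0 <= y <= x -> h y < l).
  assert (HE0 : E 0). { split; [lra|]. intros y Hy. replace y with 0 by lra. auto. }
  assert (HB : bound E). { exists t. intros x [Hx _]. lra. }
  destruct (completeness E HB (ex_intro _ 0 HE0)) as [m [Hub Hlub]].
  assert (Hm0 : 0 <= m) by (apply Hub; auto).
  assert (Hmt : m <= t) by (apply Hlub; intros x [Hx _]; lra).
  assert (HmT : Rbar_lt m T) by (apply (Tlt m t); auto).
  assert (HA : forall y, 0 <= y < m -> h y < l).
  { intros y Hy. destruct (Rlt_dec (h y) l) as [|Hny]; auto. exfalso.
    assert (is_upper_bound E y).
    { intros x [Hx Hxl]. destruct (Rle_dec x y) as [|Hxy]; auto. exfalso. apply Hny. apply Hxl. lra. }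
    specialize (Hlub y H). lra. }
  assert (HBm : h m < l).
  { destruct (Req_dec m 0) as [Em|Em]. { rewrite Em; auto. }
    assert (h m <= h 0).
    { destruct (Rle_dec (h m) (h 0)) as [|Hn2]; auto. exfalso.
      destruct (cont_eps h m (proj1 (Hd m ltac:(lra) HmT)) (h m - h 0) ltac:(lra)) as [d [Hdp Hdd]].
      set (y := Rmax (m/2) (m - d/2)).
      assert (m/2 <= y) by apply Rmax_l. assert (m - d/2 <= y) by apply Rmax_r.
      assert (y < m) by (apply Rmax_lub_lt; lra).
      assert (Rabs (y - m) < d) by (rewrite Rabs_left by lra; lra).
      specialize (Hdd y H3). apply Rabs_def2 in Hdd.
      assert (h y <= h 0).
      { apply le0; [lra| apply (Tlt y m); [lra|auto] |]. intros; apply HA; lra. }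
      lra. }
    lra. }
  assert (Hmt' : m < t). { destruct (Req_dec m t) as [Emt|]; [subst m; lra| lra]. }
  assert (HR : exists d, 0 < d /\ forall y, m <= y < m + d -> h y < l).
  { destruct (Req_dec m 0) as [Em|Em].
    - destruct (Hc0 (l - h 0) ltac:(lra)) as [d [Hdp Hdd]]. exists d. split; auto.
      intros y Hy. subst m. destruct (Req_dec y 0) as [Ey|Ey]. { subst; auto. }
      specialize (Hdd y ltac:(lra)). apply Rabs_def2 in Hdd. lra.
    - destruct (cont_eps h m (proj1 (Hd m ltac:(lra) HmT)) (l - h m) ltac:(lra)) as [d [Hdp Hdd]].
      exists d. split; auto. intros y Hy.
      assert (Rabs (y - m) < d) by (apply Rabs_def1; lra).
      specialize (Hdd y H). apply Rabs_def2 in Hdd. lra. }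
  destruct HR as [d [Hdp Hdd]].
  set (m' := Rmin (m + d/2) t).
  assert (m' <= t) by apply Rmin_r. assert (m' <= m + d/2) by apply Rmin_l.
  assert (m < m') by (apply Rmin_glb_lt; lra).
  assert (E m').
  { split; [lra|]. intros y Hy. destruct (Rlt_dec y m). { apply HA; lra. } apply Hdd; lra. }
  specialize (Hub _ H3). lra.
Qed.

Lemma trap_decay t : 0 <= t -> Rbar_lt t T -> h t < l /\ h t <= h 0 /\ h t * (1 + s * t / 2) <= h 0.
Proof.
  intros Ht HtT. split; [apply trap; auto|].
  destruct (Req_dec t 0) as [E|E].
  { subst. split; [lra|]. replace (1 + s * 0 / 2) with 1 by field. lra. }
  assert (Hle : forall b, 0 < b <= t -> h b <= h 0).
  { intros b Hb. apply le0; [lra| apply (Tlt b t); [lra|auto] |]. intros; apply trap; [lra| apply (Tlt t0 t); [lra|auto]]. }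
  split; [apply Hle; lra|].
  assert (h t * (1 + s * (t - t/2)) <= h (t/2)).
  { apply decay; [lra|lra|auto|]. intros; apply trap; [lra| apply (Tlt t0 t); [lra|auto]]. }
  assert (h (t/2) <= h 0) by (apply Hle; lra).
  replace (1 + s * t / 2) with (1 + s * (t - t/2)) by field. lra.
Qed.
End Trap.

Definition RHq (b1 b2 b3 b4 : R) := b1*b2*b3 - b1^2*b4 - b3^2.

Lemma Bf_lin2 g1 g2 d1 d2 ka kb X Y Z u1 u2 u3 u4 p1 p2 p3 p4 c e1 e2 :
  Bf g1 g2 d1 d2 ka kb X Y Z u1 u2 u3 u4 (p1 + c*u1 + e1) (p2 + c*u2 + e2) (p3 + c*u3) (p4 + c*u4)
  = Bf g1 g2 d1 d2 ka kb X Y Z u1 u2 u3 u4 p1 p2 p3 p4 + c * Bf g1 g2 d1 d2 ka kb X Y Z u1 u2 u3 u4 u1 u2 u3 u4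
    + Bf g1 g2 d1 d2 ka kb X Y Z u1 u2 u3 u4 e1 e2 0 0.
Proof. unfold Bf, z1, z2, z3, z4, w2, w3, w4. ring. Qed.

Lemma Bf_diff g1 g2 d1 d2 ka kb X Y Z u1 u2 u3 u4 v1 v2 v3 v4 :
  Bf g1 g2 d1 d2 ka kb X Y Z u1 u2 u3 u4 u1 u2 u3 u4 - Bf g1 g2 d1 d2 ka kb X Y Z v1 v2 v3 v4 v1 v2 v3 v4
  = Bf g1 g2 d1 d2 ka kb X Y Z (u1-v1) (u2-v2) (u3-v3) (u4-v4) u1 u2 u3 u4
    + Bf g1 g2 d1 d2 ka kb X Y Z v1 v2 v3 v4 (u1-v1) (u2-v2) (u3-v3) (u4-v4).
Proof. unfold Bf, z1, z2, z3, z4, w2, w3, w4. ring. Qed.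

Lemma Bf_deriv g1 g2 d1 d2 ka kb X Y Z (f1 f2 f3 f4 : R -> R) t v1 v2 v3 v4 :
  is_derive f1 t v1 -> is_derive f2 t v2 -> is_derive f3 t v3 -> is_derive f4 t v4 ->
  is_derive (fun t => Bf g1 g2 d1 d2 ka kb X Y Z (f1 t) (f2 t) (f3 t) (f4 t) (f1 t) (f2 t) (f3 t) (f4 t)) t
    (2 * Bf g1 g2 d1 d2 ka kb X Y Z (f1 t) (f2 t) (f3 t) (f4 t) v1 v2 v3 v4).
Proof.
  intros H1 H2 H3 H4. unfold Bf, z1, z2, z3, z4, w2, w3, w4.
  auto_derive.
  - repeat split; eexists; eassumption.
  - replace (Derive (fun x : R => f1 x) t) with v1 by (symmetry; apply is_derive_unique; exact H1).
    replace (Derive (fun x : R => f2 x) t) with v2 by (symmetry; apply is_derive_unique; exact H2).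
    replace (Derive (fun x : R => f3 x) t) with v3 by (symmetry; apply is_derive_unique; exact H3).
    replace (Derive (fun x : R => f4 x) t) with v4 by (symmetry; apply is_derive_unique; exact H4).
    ring.
Qed.

Lemma S1sq_le u1 u2 u3 u4 : (S1 u1 u2 u3 u4)^2 <= 4 * (u1^2+u2^2+u3^2+u4^2).
Proof.
  unfold S1. rewrite <- (pow2_abs u1), <- (pow2_abs u2), <- (pow2_abs u3), <- (pow2_abs u4).
  generalize (Rabs u1) (Rabs u2) (Rabs u3) (Rabs u4). intros b1 b2 b3 b4.
  pose proof (pow2_ge_0 (b1-b2)); pose proof (pow2_ge_0 (b1-b3)); pose proof (pow2_ge_0 (b1-b4)); pose proof (pow2_ge_0 (b2-b3)); pose proof (pow2_ge_0 (b2-b4)); pose proof (pow2_ge_0 (b3-b4)). nra.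
Qed.

Lemma shift_exists ga gb da db ka kb X Y Z :
  0 < a1 ga gb da db -> 0 < a3 ga gb da db ka X -> 0 < a4 ga gb da db ka kb X Y Z ->
  0 < RHq (a1 ga gb da db) (a2 ga gb da db ka X) (a3 ga gb da db ka X) (a4 ga gb da db ka kb X Y Z) ->
  exists s, 0 < s /\
   0 < a1 (ga-s) (gb-s) (da-s) (db-s) /\ 0 < a3 (ga-s) (gb-s) (da-s) (db-s) ka X /\
   0 < a4 (ga-s) (gb-s) (da-s) (db-s) ka kb X Y Z /\
   0 < RHq (a1 (ga-s) (gb-s) (da-s) (db-s)) (a2 (ga-s) (gb-s) (da-s) (db-s) ka X)
           (a3 (ga-s) (gb-s) (da-s) (db-s) ka X) (a4 (ga-s) (gb-s) (da-s) (db-s) ka kb X Y Z).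
Proof.
  intros H1 H3 H4 HR.
  destruct (cont_pos (fun s => a1 (ga-s) (gb-s) (da-s) (db-s))) as [e1 [He1 K1]].
  { unfold a1. reg. } { rewrite !Rminus_0_r. auto. }
  destruct (cont_pos (fun s => a3 (ga-s) (gb-s) (da-s) (db-s) ka X)) as [e3 [He3 K3]].
  { unfold a3. reg. } { rewrite !Rminus_0_r. auto. }
  destruct (cont_pos (fun s => a4 (ga-s) (gb-s) (da-s) (db-s) ka kb X Y Z)) as [e4 [He4 K4]].
  { unfold a4. reg. } { rewrite !Rminus_0_r. auto. }
  destruct (cont_pos (fun s => RHq (a1 (ga-s) (gb-s) (da-s) (db-s)) (a2 (ga-s) (gb-s) (da-s) (db-s) ka X)
           (a3 (ga-s) (gb-s) (da-s) (db-s) ka X) (a4 (ga-s) (gb-s) (da-s) (db-s) ka kb X Y Z))) as [e5 [He5 K5]].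
  { unfold RHq, a1, a2, a3, a4. reg. } { rewrite !Rminus_0_r. auto. }
  set (s := Rmin (Rmin e1 e3) (Rmin e4 e5) / 2).
  assert (Hs : 0 < Rmin (Rmin e1 e3) (Rmin e4 e5)) by (repeat apply Rmin_pos; lra).
  assert (Rmin (Rmin e1 e3) (Rmin e4 e5) <= e1) by (eapply Rle_trans; [apply Rmin_l|apply Rmin_l]).
  assert (Rmin (Rmin e1 e3) (Rmin e4 e5) <= e3) by (eapply Rle_trans; [apply Rmin_l|apply Rmin_r]).
  assert (Rmin (Rmin e1 e3) (Rmin e4 e5) <= e4) by (eapply Rle_trans; [apply Rmin_r|apply Rmin_l]).
  assert (Rmin (Rmin e1 e3) (Rmin e4 e5) <= e5) by (eapply Rle_trans; [apply Rmin_r|apply Rmin_r]).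
  exists s. unfold s. repeat split; [lra| apply K1 | apply K3 | apply K4 | apply K5]; lra.
Qed.

Lemma Zq_neg P pa pb : params_ok P -> 0 < pa -> Zq P pa pb < 0.
Proof.
  intros Hok Ha.
  destruct Hok as (Hma & Hmb & Hga & Hgb & Hka & Hkb & Hda & Hdb & Htha & Hthb & Hthaa & HA & HB & Hna & Hnb & Hnaa).
  unfold Zq. apply Ropp_lt_gt_0_contravar. unfold Rgt.
  apply Rdiv_lt_0_compat.
  - repeat apply Rmult_lt_0_compat; try lra; try (apply pow_lt; lra).
    apply lt_0_INR. lia.
  - apply pow_lt. pose proof (pow_lt pa (n_a P) Ha). pose proof (pow_lt (th_a P) (n_a P) Htha). lra.
Qed.

Lemma lim_of_bound (f : R -> R) l s B : 0 < s -> 0 <= B ->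
  (forall t, 0 <= t -> (f t - l)^2 * (1 + s * t / 2) <= B) -> is_lim f p_infty l.
Proof.
  intros Hs HB H. apply is_lim_spec. intro eps. simpl.
  pose proof (cond_pos eps) as He.
  exists (2 * B / (s * eps^2)). intros t Ht.
  assert (HM : 0 <= 2 * B / (s * eps^2)) by (apply Rdiv_le_0_compat; [lra| apply Rmult_lt_0_compat; [lra| apply pow_lt; lra]]).
  assert (Ht0 : 0 <= t) by lra.
  specialize (H t Ht0).
  assert (HB2 : B < eps^2 * (1 + s * t / 2)).
  { assert (2 * B < t * (s * eps^2)).
    { apply Rmult_lt_compat_r with (r := s * eps^2) in Ht; [|apply Rmult_lt_0_compat; [lra| apply pow_lt; lra]].
      unfold Rdiv in Ht. rewrite Rmult_assoc, Rinv_l, Rmult_1_r in Ht; [lra|].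
      apply Rgt_not_eq. apply Rmult_lt_0_compat; [lra| apply pow_lt; lra]. }
    pose proof (pow_lt eps 2 He). nra. }
  destruct (Rlt_dec (Rabs (f t - l)) eps) as [|Hn]; auto. exfalso.
  assert (eps^2 <= (f t - l)^2).
  { rewrite <- (pow2_abs (f t - l)). apply pow_incr. lra. }
  assert (0 < 1 + s * t / 2) by nra.
  nra.
Qed.

Lemma sq_lt_abs x c : 0 < c -> x^2 < c^2 -> Rabs x < c.
Proof.
  intros Hc H. destruct (Rlt_dec (Rabs x) c) as [|Hn]; auto. exfalso.
  assert (c^2 <= x^2) by (rewrite <- (pow2_abs x); apply pow_incr; lra). lra.
Qed.

Lemma is_derive_sub_c (f : R -> R) t v c : is_derive f t v -> is_derive (fun t => f t - c) t v.
Proof. intro H. replace v with (v - 0) by ring. apply is_derive_Reals. apply derivable_pt_lim_minus; [apply is_derive_Reals; auto| apply derivable_pt_lim_const]. Qed.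

Lemma abs_sub_le a b : Rabs a <= Rabs (a - b) + Rabs b.
Proof. replace a with ((a - b) + b) at 1 by ring. apply Rabs_triang. Qed.

Theorem theorem1 (P : params) (ra rb pa pb : R) :
  params_ok P ->
  is_steady_state P ra rb pa pb ->
  0 < pa -> 0 < pb ->
  0 < gn_eps1 P -> 0 < gn_eps3 P pa pb -> 0 < gn_eps4 P pa pb ->
  0 < gn_eps1 P * gn_eps2 P pa pb * gn_eps3 P pa pb - (gn_eps1 P) ^ 2 * gn_eps4 P pa pb
      - (gn_eps3 P pa pb) ^ 2 ->
  loc_asympt_stable P ra rb pa pb.
Proof.
  intros Hok Hss Ha Hb He1 He3 He4 HR.
  pose proof Hok as Hok'.
  destruct Hok' as (Hma & Hmb & Hga & Hgb & Hka & Hkb & Hda & Hdb & Htha & Hthb & Hthaa & HA & HB & Hna & Hnb & Hnaa).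
  set (X := Xq P pa pb) in *. set (Y := Yq P pa pb) in *. set (Z := Zq P pa pb) in *.
  set (ga := gam_a P) in *. set (gb := gam_b P) in *. set (da := del_a P) in *. set (db := del_b P) in *.
  set (ka := k_a P) in *. set (kb := k_b P) in *.
  change (gn_eps1 P) with (a1 ga gb da db) in *.
  change (gn_eps2 P pa pb) with (a2 ga gb da db ka X) in *.
  change (gn_eps3 P pa pb) with (a3 ga gb da db ka X) in *.
  change (gn_eps4 P pa pb) with (a4 ga gb da db ka kb X Y Z) in *.
  destruct (shift_exists ga gb da db ka kb X Y Z He1 He3 He4 HR) as [sg [Hsg [S1p [S3p [S4p SRp]]]]].
  unfold RHq in SRp.
  set (g1 := ga - sg) in *. set (g2 := gb - sg) in *. set (d1 := da - sg) in *. set (d2 := db - sg) in *.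
  assert (Hka0 : ka <> 0) by lra. assert (Hkb0 : kb <> 0) by lra.
  assert (HZ0 : Z <> 0) by (pose proof (Zq_neg P pa pb Hok Ha); unfold Z; lra).
  destruct (V_lower g1 g2 d1 d2 ka kb X Y Z Hka0 Hkb0 HZ0 S1p S3p S4p SRp) as [m [Hm HVl]].
  destruct (Bf_bound g1 g2 d1 d2 ka kb X Y Z S1p S3p S4p SRp) as [K [HK HBf]].
  set (BF := Bf g1 g2 d1 d2 ka kb X Y Z) in *.
  set (eta := sg * m / (16 * K + 1)).
  assert (Heta : 0 < eta) by (unfold eta; apply Rdiv_lt_0_compat; [nra|lra]).
  destruct (NL_bound P pa pb Hok Ha Hb eta Heta) as [r [Hr HNL]].
  destruct Hss as (Ss1 & Ss2 & Ss3 & Ss4).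
  assert (HDer : forall x1 x2 x3 x4, Rabs (x3 - pa) < r -> Rabs (x4 - pb) < r ->
    2 * BF (x1 - ra) (x2 - rb) (x3 - pa) (x4 - pb)
      (F_ra P x1 x2 x3 x4) (F_rb P x1 x2 x3 x4) (F_pa P x1 x2 x3 x4) (F_pb P x1 x2 x3 x4)
    <= - sg * BF (x1 - ra) (x2 - rb) (x3 - pa) (x4 - pb) (x1 - ra) (x2 - rb) (x3 - pa) (x4 - pb)).
  { intros x1 x2 x3 x4 H3 H4.
    destruct (HNL (x3 - pa) (x4 - pb) H3 H4) as [N1 N2].
    replace (pa + (x3 - pa)) with x3 in N1, N2 by ring.
    replace (pb + (x4 - pb)) with x4 in N1 by ring.
    change (Xq P pa pb) with X in N1. change (Yq P pa pb) with Y in N1. change (Zq P pa pb) with Z in N2.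
    set (u1 := x1 - ra) in *. set (u2 := x2 - rb) in *. set (u3 := x3 - pa) in *. set (u4 := x4 - pb) in *.
    set (e1 := Hf P x3 x4 - Hf P pa pb - (X * u3 + Y * u4)) in *.
    set (e2 := Gf P x3 - Gf P pa - Z * u3) in *.
    assert (E1 : F_ra P x1 x2 x3 x4 = L1 g1 X Y u1 u2 u3 u4 + (- sg) * u1 + e1).
    { unfold F_ra in *. unfold L1, e1, Hf, u1, u2, u3, u4, g1, ga, X, Y in *. lra. }
    assert (E2 : F_rb P x1 x2 x3 x4 = L2 g2 Z u1 u2 u3 u4 + (- sg) * u2 + e2).
    { unfold F_rb in *. unfold L2, e2, Gf, u1, u2, u3, u4, g2, gb, Z in *. lra. }
    assert (E3 : F_pa P x1 x2 x3 x4 = L3 d1 ka u1 u2 u3 u4 + (- sg) * u3).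
    { unfold F_pa in *. unfold L3, u1, u2, u3, u4, d1, ka, da in *. lra. }
    assert (E4 : F_pb P x1 x2 x3 x4 = L4 d2 kb u1 u2 u3 u4 + (- sg) * u4).
    { unfold F_pb in *. unfold L4, u1, u2, u3, u4, d2, kb, db in *. lra. }
    rewrite E1, E2, E3, E4. unfold BF. rewrite Bf_lin2. rewrite Bf_L by auto. fold BF.
    pose proof (HBf u1 u2 u3 u4 e1 e2 0 0) as HB1.
    pose proof (HVl u1 u2 u3 u4) as HV.
    pose proof (S1sq_le u1 u2 u3 u4) as HS.
    pose proof (S1_nonneg u1 u2 u3 u4) as HS0.
    assert (HSe : S1 e1 e2 0 0 <= 2 * eta * S1 u1 u2 u3 u4).
    { unfold S1. rewrite Rabs_R0. unfold S1 in HS0. pose proof (Rabs_pos u1); pose proof (Rabs_pos u2).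
      pose proof (Rabs_pos u3); pose proof (Rabs_pos u4). nra. }
    assert (HBe : Rabs (BF u1 u2 u3 u4 e1 e2 0 0) <= 2 * K * eta * (S1 u1 u2 u3 u4)^2).
    { eapply Rle_trans; [exact HB1|]. 
      apply Rle_trans with (K * S1 u1 u2 u3 u4 * (2 * eta * S1 u1 u2 u3 u4)).
      - apply Rmult_le_compat_l; [nra|exact HSe].
      - right; ring. }
    set (Q := u1^2+u2^2+u3^2+u4^2) in *.
    set (V := BF u1 u2 u3 u4 u1 u2 u3 u4) in *.
    assert (HKe : 16 * K * eta <= sg * m).
    { assert (Eeta : eta * (16*K+1) = sg*m) by (unfold eta; field; lra). nra. }
    assert (HBe2 : 2 * Rabs (BF u1 u2 u3 u4 e1 e2 0 0) <= sg * V).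
    { assert (2 * K * eta * (S1 u1 u2 u3 u4)^2 <= 8 * K * eta * Q).
      { replace (8 * K * eta * Q) with ((2*K*eta) * (4*Q)) by ring.
        apply Rmult_le_compat_l; [|exact HS]. apply Rmult_le_pos; lra. }
      assert (0 <= Q) by (unfold Q; pose proof (pow2_ge_0 u1); pose proof (pow2_ge_0 u2); pose proof (pow2_ge_0 u3); pose proof (pow2_ge_0 u4); lra).
      nra. }
    pose proof (Rle_abs (BF u1 u2 u3 u4 e1 e2 0 0)).
    pose proof (pow2_ge_0 (z4 g1 g2 d1 d2 ka kb X Z u1 u2 u3 u4)).
    nra. }
  set (hh := fun (xa xb ya yb : R -> R) t => BF (xa t - ra) (xb t - rb) (ya t - pa) (yb t - pb)
                 (xa t - ra) (xb t - rb) (ya t - pa) (yb t - pb)).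
  assert (HQh : forall x1 x2 x3 x4, m * ((x1-ra)^2 + (x2-rb)^2 + (x3-pa)^2 + (x4-pb)^2)
              <= BF (x1-ra) (x2-rb) (x3-pa) (x4-pb) (x1-ra) (x2-rb) (x3-pa) (x4-pb)).
  { intros. apply HVl. }
  assert (HQ0 : forall x1 x2 x3 x4, 0 <= (x1-ra)^2 + (x2-rb)^2 + (x3-pa)^2 + (x4-pb)^2).
  { intros. pose proof (pow2_ge_0 (x1-ra)); pose proof (pow2_ge_0 (x2-rb)); pose proof (pow2_ge_0 (x3-pa)); pose proof (pow2_ge_0 (x4-pb)); lra. }
  assert (HCore : forall eps, 0 < eps -> exists delta, 0 < delta /\
     forall (T : Rbar) xa xb ya yb, is_solution_on P T xa xb ya yb ->
       dist4 (xa 0) (xb 0) (ya 0) (yb 0) ra rb pa pb < delta ->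
       forall t, 0 <= t -> Rbar_lt t T ->
         dist4 (xa t) (xb t) (ya t) (yb t) ra rb pa pb < eps /\
         hh xa xb ya yb t * (1 + sg * t / 2) <= hh xa xb ya yb 0).
  { intros eps Heps.
    set (rho := Rmin r eps). assert (Hrho : 0 < rho) by (apply Rmin_pos; lra).
    assert (Hrr : rho <= r) by apply Rmin_l. assert (Hre : rho <= eps) by apply Rmin_r.
    set (ell := m * rho^2). assert (Hell : 0 < ell) by (unfold ell; pose proof (pow_lt rho 2 Hrho); nra).
    set (delta := Rmin 1 (ell / (4*K+1))).
    assert (Hdel : 0 < delta) by (apply Rmin_pos; [lra| apply Rdiv_lt_0_compat; lra]).
    assert (Hd1 : delta <= 1) by apply Rmin_l. assert (Hd2 : delta <= ell / (4*K+1)) by apply Rmin_r.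
    exists delta. split; auto.
    intros T xa xb ya yb Hsol Hdist0.
    destruct Hsol as [Hder [Ca [Cb [Cc Cd]]]].
    set (h := hh xa xb ya yb).
    assert (Hpos : forall t, 0 <= h t).
    { intro t. unfold h, hh. pose proof (HQh (xa t) (xb t) (ya t) (yb t)). pose proof (HQ0 (xa t) (xb t) (ya t) (yb t)). nra. }
    assert (Hsmall : forall t, h t < ell -> (xa t - ra)^2 + (xb t - rb)^2 + (ya t - pa)^2 + (yb t - pb)^2 < rho^2).
    { intros t Ht. unfold h, hh in Ht. pose proof (HQh (xa t) (xb t) (ya t) (yb t)). unfold ell in Ht.
      apply Rmult_lt_reg_l with m; lra. }
    assert (H0 : h 0 < ell).
    { set (Q0 := (xa 0 - ra)^2 + (xb 0 - rb)^2 + (ya 0 - pa)^2 + (yb 0 - pb)^2).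
      assert (HQ00 : 0 <= Q0) by apply HQ0.
      assert (HQd : Q0 < delta^2).
      { unfold dist4 in Hdist0. fold Q0 in Hdist0. pose proof (sqrt_sqrt Q0 HQ00). pose proof (sqrt_pos Q0). nra. }
      assert (HQl : Q0 < ell / (4*K+1)) by nra.
      pose proof (HBf (xa 0 - ra) (xb 0 - rb) (ya 0 - pa) (yb 0 - pb) (xa 0 - ra) (xb 0 - rb) (ya 0 - pa) (yb 0 - pb)) as HBq.
      pose proof (S1sq_le (xa 0 - ra) (xb 0 - rb) (ya 0 - pa) (yb 0 - pb)) as HSq.
      fold Q0 in HSq.
      assert (h 0 <= 4 * K * Q0).
      { unfold h, hh. eapply Rle_trans; [apply Rle_abs|]. eapply Rle_trans; [exact HBq|].
        rewrite Rmult_assoc. replace (4 * K * Q0) with (K * (4 * Q0)) by ring. apply Rmult_le_compat_l; [lra|].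
        simpl in HSq. rewrite Rmult_1_r in HSq. exact HSq. }
      assert ((4*K+1) * Q0 < ell).
      { apply Rmult_lt_reg_r with (/ (4*K+1)). apply Rinv_0_lt_compat; lra.
        rewrite (Rmult_comm (4*K+1)), Rmult_assoc, Rinv_r, Rmult_1_r by lra. exact HQl. }
      nra. }
    assert (Hd : forall t, 0 < t -> Rbar_lt t T -> ex_derive h t /\ (h t < ell -> Derive h t <= - sg * h t)).
    { intros t Ht HtT. destruct (Hder t Ht HtT) as [Da [Db [Dc Dd]]].
      pose proof (Bf_deriv g1 g2 d1 d2 ka kb X Y Z _ _ _ _ t _ _ _ _
         (is_derive_sub_c _ _ _ ra Da) (is_derive_sub_c _ _ _ rb Db)
         (is_derive_sub_c _ _ _ pa Dc) (is_derive_sub_c _ _ _ pb Dd)) as HD.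
      fold BF in HD. split.
      - eexists. exact HD.
      - intro Hl. replace (Derive h t) with
          (2 * BF (xa t - ra) (xb t - rb) (ya t - pa) (yb t - pb)
             (F_ra P (xa t) (xb t) (ya t) (yb t)) (F_rb P (xa t) (xb t) (ya t) (yb t))
             (F_pa P (xa t) (xb t) (ya t) (yb t)) (F_pb P (xa t) (xb t) (ya t) (yb t))).
        2:{ symmetry. apply is_derive_unique. exact HD. }
        apply HDer.
        + pose proof (Hsmall t Hl). apply Rlt_le_trans with rho; auto. apply sq_lt_abs; auto.
          pose proof (pow2_ge_0 (xa t - ra)); pose proof (pow2_ge_0 (xb t - rb)); pose proof (pow2_ge_0 (yb t - pb)). lra.
        + pose proof (Hsmall t Hl). apply Rlt_le_trans with rho; auto. apply sq_lt_abs; auto.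
          pose proof (pow2_ge_0 (xa t - ra)); pose proof (pow2_ge_0 (xb t - rb)); pose proof (pow2_ge_0 (ya t - pa)). lra. }
    assert (Hc0 : forall e, 0 < e -> exists d, 0 < d /\ forall y, 0 < y < d -> Rabs (h y - h 0) < e).
    { intros e He.
      set (c0 := S1 (xa 0 - ra) (xb 0 - rb) (ya 0 - pa) (yb 0 - pb)).
      assert (Hc0p : 0 <= c0) by apply S1_nonneg.
      set (e' := Rmin 1 (e / (4 * (K+1) * (4 + 2*c0)))).
      assert (He' : 0 < e') by (apply Rmin_pos; [lra| apply Rdiv_lt_0_compat; [lra| nra]]).
      assert (He'1 : e' <= 1) by apply Rmin_l.
      assert (He'2 : e' <= e / (4 * (K+1) * (4 + 2*c0))) by apply Rmin_r.
      destruct (rc_eps _ _ Ca e' He') as [da0 [Hda0 Kda]].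
      destruct (rc_eps _ _ Cb e' He') as [db0 [Hdb0 Kdb]].
      destruct (rc_eps _ _ Cc e' He') as [dc0 [Hdc0 Kdc]].
      destruct (rc_eps _ _ Cd e' He') as [dd0 [Hdd0 Kdd]].
      exists (Rmin (Rmin da0 db0) (Rmin dc0 dd0)). split. { repeat apply Rmin_pos; auto. }
      intros y Hy.
      assert (y < da0) by (eapply Rlt_le_trans; [apply Hy| eapply Rle_trans; [apply Rmin_l|apply Rmin_l]]).
      assert (y < db0) by (eapply Rlt_le_trans; [apply Hy| eapply Rle_trans; [apply Rmin_l|apply Rmin_r]]).
      assert (y < dc0) by (eapply Rlt_le_trans; [apply Hy| eapply Rle_trans; [apply Rmin_r|apply Rmin_l]]).
      assert (y < dd0) by (eapply Rlt_le_trans; [apply Hy| eapply Rle_trans; [apply Rmin_r|apply Rmin_r]]).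
      specialize (Kda y ltac:(lra)). specialize (Kdb y ltac:(lra)). specialize (Kdc y ltac:(lra)). specialize (Kdd y ltac:(lra)).
      unfold h, hh. unfold BF. rewrite Bf_diff. fold BF.
      set (D := S1 (xa y - ra - (xa 0 - ra)) (xb y - rb - (xb 0 - rb)) (ya y - pa - (ya 0 - pa)) (yb y - pb - (yb 0 - pb))).
      assert (HD : D < 4 * e').
      { unfold D, S1. replace (xa y - ra - (xa 0 - ra)) with (xa y - xa 0) by ring.
        replace (xb y - rb - (xb 0 - rb)) with (xb y - xb 0) by ring.
        replace (ya y - pa - (ya 0 - pa)) with (ya y - ya 0) by ring.
        replace (yb y - pb - (yb 0 - pb)) with (yb y - yb 0) by ring. lra. }
      assert (HD0 : 0 <= D) by apply S1_nonneg.
      assert (HSy : S1 (xa y - ra) (xb y - rb) (ya y - pa) (yb y - pb) <= D + c0).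
      { unfold D, c0, S1.
        pose proof (abs_sub_le (xa y - ra) (xa 0 - ra)); pose proof (abs_sub_le (xb y - rb) (xb 0 - rb));
        pose proof (abs_sub_le (ya y - pa) (ya 0 - pa)); pose proof (abs_sub_le (yb y - pb) (yb 0 - pb)). lra. }
      pose proof (HBf (xa y - ra - (xa 0 - ra)) (xb y - rb - (xb 0 - rb)) (ya y - pa - (ya 0 - pa)) (yb y - pb - (yb 0 - pb))
                      (xa y - ra) (xb y - rb) (ya y - pa) (yb y - pb)) as B1.
      pose proof (HBf (xa 0 - ra) (xb 0 - rb) (ya 0 - pa) (yb 0 - pb)
                      (xa y - ra - (xa 0 - ra)) (xb y - rb - (xb 0 - rb)) (ya y - pa - (ya 0 - pa)) (yb y - pb - (yb 0 - pb))) as B2.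
      fold D in B1, B2. fold c0 in B2.
      pose proof (S1_nonneg (xa y - ra) (xb y - rb) (ya y - pa) (yb y - pb)).
      eapply Rle_lt_trans. apply Rabs_triang.
      assert (HB1' : K * D * S1 (xa y - ra) (xb y - rb) (ya y - pa) (yb y - pb) <= K * D * (D + c0)).
      { apply Rmult_le_compat_l; [nra|auto]. }
      assert (HKD : K * D * (D + 2 * c0) <= K * (4*e') * (4 + 2 * c0)).
      { apply Rmult_le_compat; [nra| lra | nra | lra]. }
      assert (HE : 4 * e' * (4 + 2*c0) * (K+1) <= e).
      { apply Rle_trans with (4 * (e / (4 * (K + 1) * (4 + 2 * c0))) * (4 + 2*c0) * (K+1)).
        - repeat apply Rmult_le_compat_r; lra.
        - right. field. split; lra. }
      nra. }
    intros t Ht HtT.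
    destruct (trap_decay h T ell sg Hsg Hd Hc0 Hpos H0 t Ht HtT) as [Hlt [_ Hdec]].
    split; [|exact Hdec].
    pose proof (Hsmall t Hlt). unfold dist4.
    set (Qt := (xa t - ra)^2 + (xb t - rb)^2 + (ya t - pa)^2 + (yb t - pb)^2) in *.
    assert (0 <= Qt) by apply HQ0.
    apply Rlt_le_trans with rho; auto.
    destruct (Rlt_dec (sqrt Qt) rho) as [|Hn]; auto. exfalso.
    pose proof (sqrt_sqrt Qt H1). nra. }
  split.
  - intros eps Heps. destruct (HCore eps Heps) as [delta [Hdel Hc]]. exists delta. split; auto.
    intros. apply (Hc T xa xb ya yb); auto.
  - destruct (HCore 1 ltac:(lra)) as [delta [Hdel Hc]]. exists delta. split; auto.
    intros xa xb ya yb Hsol Hdist.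
    set (B := hh xa xb ya yb 0 / m).
    assert (HB0 : 0 <= B).
    { unfold B, hh. apply Rdiv_le_0_compat; [|lra]. pose proof (HQh (xa 0) (xb 0) (ya 0) (yb 0)). pose proof (HQ0 (xa 0) (xb 0) (ya 0) (yb 0)). nra. }
    assert (Hall : forall t, 0 <= t -> ((xa t - ra)^2 + (xb t - rb)^2 + (ya t - pa)^2 + (yb t - pb)^2) * (1 + sg * t / 2) <= B).
    { intros t Ht. destruct (Hc p_infty xa xb ya yb Hsol Hdist t Ht I) as [_ Hdec].
      pose proof (HQh (xa t) (xb t) (ya t) (yb t)). fold (hh xa xb ya yb t) in H.
      unfold B. apply Rmult_le_reg_l with m; auto.
      replace (m * (hh xa xb ya yb 0 / m)) with (hh xa xb ya yb 0) by (field; lra).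
      assert (0 < 1 + sg * t / 2) by nra. nra. }
    assert (Hpt : forall t, 0 <= t -> 0 < 1 + sg * t / 2) by (intros; nra).
    repeat split; apply (lim_of_bound _ _ sg B Hsg HB0); intros t Ht; specialize (Hall t Ht); specialize (Hpt t Ht);
      pose proof (pow2_ge_0 (xa t - ra)); pose proof (pow2_ge_0 (xb t - rb)); pose proof (pow2_ge_0 (ya t - pa)); pose proof (pow2_ge_0 (yb t - pb)); nra.
Qed.
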